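(* Let $S$ be a profinite semigroup and let $\mathscr F$ be a fundamental system of entourages for $S$ consisting of open fully invariant congruences. For $\rho\in\mathscr F$, let $r_\rho\colon \operatorname{End} S\to \operatorname{End}(S/\rho)$ be the natural map sending $f$ to the induced endomorphism $[s]_\rho\mapsto [f(s)]_\rho$. Then $r_\rho$ is continuous (with $\operatorname{End} S$ carrying the compact-open topology), so its kernel $\widehat\rho=\{(f,g): r_\rho(f)=r_\rho(g)\}$ is an open congruence on $\operatorname{End} S$. Setting $\widehat{\mathscr F}=\{\widehat\rho\mid \rho\in\mathscr F\}$, one has $$\operatorname{End} S\cong \varprojlim_{\widehat\rho\in\widehat{\mathscr F}} \operatorname{End} S/\widehat\rho .$$ Analogously, if $\mathscr F$ is a fundamental system of entourages for $S$ consisting of open characteristic congruences, then the corresponding maps $r_\rho\colon\operatorname{Aut} S\to\operatorname{Aut}(S/\rho)$ are continuous, their kernels $\widehat\rho$ are open congruences on $\operatorname{Aut} S$, and $\operatorname{Aut} S\cong\varprojlim_{\widehat\rho\in\widehat{\mathscr F}}\operatorname{Aut} S/\widehat\rho$.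
   Context: $\operatorname{End} S$ is the monoid of continuous endomorphisms and $\operatorname{Aut} S$ the group of continuous automorphisms of $S$, with the compact-open topology. A congruence $\rho$ on $S$ is open if it is an open subset of $S\times S$; fully invariant if for every continuous endomorphism $f$ of $S$, $(x,y)\in\rho$ implies $(f(x),f(y))\in\rho$; characteristic if the same holds for every continuous automorphism $f$. A fundamental system of entourages for $S$ is a family of such congruences such that every open congruence on $S$ contains one of them. The projective limit is taken over $\widehat{\mathscr F}$ ordered by inclusion, with the natural quotient maps, and the isomorphism is induced by the canonical maps $\operatorname{End} S\to \operatorname{End} S/\widehat\rho$. *)

(* Defs.v *)
From HB Require Import structures.
From mathcomp Require Import all_boot all_order all_algebra.
From mathcomp Require Import all_classical all_reals all_analysis.
Set Implicit Arguments. Unset Strict Implicit. Unset Printing Implicit Defensive.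
Local Open Scope classical_set_scope.

Section Defs.
Context {S : topologicalType}.
Variable mul : S -> S -> S.

Definition profinite_semigroup :=
  [/\ associative mul,
      continuous (fun p : S * S => mul p.1 p.2),
      compact [set: S], hausdorff_space S & totally_disconnected [set: S]].

Definition congruence (rho : set (S * S)) :=
  [/\ forall x, rho (x, x),
      forall x y, rho (x, y) -> rho (y, x),
      forall x y z, rho (x, y) -> rho (y, z) -> rho (x, z) &
      forall x y z w, rho (x, y) -> rho (z, w) -> rho (mul x z, mul y w)].

Definition is_hom (f : S -> S) := forall x y, f (mul x y) = mul (f x) (f y).

Definition EndS : set (S -> S) := [set f | continuous f /\ is_hom f].

Definition AutS : set (S -> S) :=
  [set f | [/\ continuous f, is_hom f &
            exists g : S -> S, [/\ continuous g, cancel f g & cancel g f]]].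

Definition fully_invariant (rho : set (S * S)) :=
  forall f, EndS f -> forall x y, rho (x, y) -> rho (f x, f y).

Definition characteristic (rho : set (S * S)) :=
  forall f, AutS f -> forall x y, rho (x, y) -> rho (f x, f y).

Definition fundamental_system (P : set (S * S) -> Prop)
    (F : set (set (S * S))) :=
  (forall rho, F rho -> [/\ open rho, congruence rho & P rho]) /\
  (forall sigma : set (S * S), open sigma -> congruence sigma ->
     exists2 rho, F rho & rho `<=` sigma).

Variable M : set (S -> S).

Definition M_open (U : set (S -> S)) :=
  exists V : set {compact-open, S -> S}, open V /\ U = V `&` M.

Definition M2_open (sigma : set ((S -> S) * (S -> S))) :=
  forall f g, sigma (f, g) ->
    exists U V, [/\ M_open U, M_open V, U f, V g &
                  forall f' g', U f' -> V g' -> sigma (f', g')].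

Definition M_congruence (sigma : set ((S -> S) * (S -> S))) :=
  [/\ forall f g, sigma (f, g) -> M f /\ M g,
      forall f, M f -> sigma (f, f),
      forall f g, sigma (f, g) -> sigma (g, f),
      forall f g h, sigma (f, g) -> sigma (g, h) -> sigma (f, h) &
      forall f g h k, sigma (f, g) -> sigma (h, k) -> sigma (f \o h, g \o k)].

(** r_rho f = r_rho g  iff  the induced maps [s] |-> [f s], [s] |-> [g s] on S/rho
    coincide, i.e. rho (f s, g s) for all s.  rhat rho is the kernel of r_rho. *)
Definition rhat (rho : set (S * S)) : set ((S -> S) * (S -> S)) :=
  [set p | [/\ M p.1, M p.2 & forall s, rho (p.1 s, p.2 s)]].

(** r_rho : M -> End(S/rho) is continuous; S/rho is finite discrete (rho open,
    S compact), so End(S/rho) with the compact-open topology is discrete and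
    continuity means that the fibres of r_rho are open in M. *)
Definition r_continuous (rho : set (S * S)) :=
  forall f, M f -> M_open [set g | rhat rho (f, g)].

(** An element of the limit is a family c assigning to each sigma in Fh a
    sigma-class c sigma (a subset of M), compatible with the bonding maps
    M/sigma -> M/tau for sigma included in tau; c is empty off Fh. *)
Variable Fh : set (set ((S -> S) * (S -> S))).

Definition is_class (sigma : set ((S -> S) * (S -> S))) (C : set (S -> S)) :=
  exists2 f, M f & C = [set g | sigma (f, g)].

Definition family := set ((S -> S) * (S -> S)) -> set (S -> S).

Definition proj_lim (c : family) :=
  [/\ forall sigma, Fh sigma -> is_class sigma (c sigma),
      forall sigma tau, Fh sigma -> Fh tau -> sigma `<=` tau ->
                        c sigma `<=` c tau &
      forall sigma, ~ Fh sigma -> c sigma = set0].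

Definition lim_mul (c d : family) : family := fun sigma =>
  [set h | Fh sigma /\
     exists x y, [/\ c sigma x, d sigma y & sigma (x \o y, h)]].

(** open sets of the limit: subspace topology of the product of the discrete
    spaces M/sigma *)
Definition lim_open (W : set family) :=
  W `<=` proj_lim /\
  forall c, W c -> exists J : set (set ((S -> S) * (S -> S))),
    [/\ finite_set J, J `<=` Fh &
        forall c', proj_lim c' -> (forall sigma, J sigma -> c' sigma = c sigma) ->
                   W c'].

Definition canon (f : S -> S) : family := fun sigma =>
  [set g | Fh sigma /\ sigma (f, g)].

Definition canon_iso :=
  [/\ forall f, M f -> proj_lim (canon f),
      forall f g, M f -> M g -> canon f = canon g -> f = g,
      forall c, proj_lim c -> exists2 f, M f & canon f = c,
      forall f g, M f -> M g -> canon (f \o g) = lim_mul (canon f) (canon g) &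
      forall U, U `<=` M -> (M_open U <-> lim_open (canon @` U))].

End Defs.

Definition limit_conclusion {S : topologicalType} (M : set (S -> S))
    (F : set (set (S * S))) :=
  (forall rho, F rho ->
     [/\ r_continuous M rho, M_congruence M (rhat M rho)
       & M2_open M (rhat M rho)]) /\
  canon_iso M [set rhat M rho | rho in F].

(* Main.v *)
Require Import Defs.
From HB Require Import structures.
From mathcomp Require Import all_boot all_order all_algebra.
From mathcomp Require Import all_classical all_reals all_analysis.
From mathcomp Require Import Rstruct.
Require Import Defs.

Set Implicit Arguments. Unset Strict Implicit. Unset Printing Implicit Defensive.
Local Open Scope classical_set_scope.

Section PT.
Variables (T : topologicalType) (x0 : T).
Definition PT : Type := let _ := x0 in T.
HB.instance Definition _ := Topological.on PT.
HB.instance Definition _ := isPointed.Build PT x0.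
End PT.

Lemma cover_seq (T : topologicalType) (A : set T) (U : T -> set T) :
  compact A -> (forall p, A p -> open (U p) /\ U p p) ->
  exists s : seq T, (forall p, p \in s -> A p) /\
    (forall x, A x -> exists2 p, p \in s & U p x).
Proof.
move=> cA hU.
have [[x0 Ax0]|A0] := pselect (exists x, A x); last first.
  by exists [::]; split => // x Ax; exfalso; apply: A0; exists x.
have cA' : @compact (@PT T x0) A by [].
move: cA'; rewrite compact_cover => /(_ (@PT T x0) A U).
case.
- by move=> i /hU [].
- by move=> x Ax; exists x => //; case: (hU x Ax).
move=> D' sD' cov; exists (finmap.enum_fset D'); split.
  by move=> p pD; have := sD' p pD; rewrite inE.
by move=> x /cov [p /= pD Upx]; exists p.
Qed.
Lemma nbhs_finI (T : topologicalType) (I : eqType) (x : T) (s : seq I) (B : I -> set T) :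
  (forall p, p \in s -> nbhs x (B p)) -> nbhs x [set y | forall p, p \in s -> B p y].
Proof.
elim: s => [|a s IH] h.
  by apply: (@filterS _ _ _ setT); [move=> y _ p|exact: filterT].
have h1 := h a (mem_head a s).
have h2 : nbhs x [set y | forall p, p \in s -> B p y].
  by apply: IH => p ps; apply: h; rewrite in_cons ps orbT.
apply: (@filterS _ _ _ _ _ _ (filterI h1 h2)) => y [Ba Bs] p; rewrite in_cons => /orP[/eqP->//|].
exact: Bs.
Qed.

Lemma open_finI (T : topologicalType) (I : eqType) (s : seq I) (B : I -> set T) :
  (forall p, p \in s -> open (B p)) -> open [set y | forall p, p \in s -> B p y].
Proof.
elim: s => [|a s IH] h.
  have -> : [set y : T | forall p, p \in [::] -> B p y] = setT.
    by apply/seteqP; split => // y _ p.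
  exact: openT.
have -> : [set y | forall p, p \in a :: s -> B p y] =
   B a `&` [set y | forall p, p \in s -> B p y].
  apply/seteqP; split => y.
    by move=> H; split; [apply: H; exact: mem_head|move=> p ps; apply: H; rewrite in_cons ps orbT].
  by move=> [Ba Bs] p; rewrite in_cons => /orP[/eqP->//|]; exact: Bs.
apply: openI; first by apply: h; exact: mem_head.
by apply: IH => p ps; apply: h; rewrite in_cons ps orbT.
Qed.

Lemma unif_lemma (P X : topologicalType) (phi : P -> X -> X) (E : X -> X -> Prop) :
  compact [set: P] -> (forall z, open (E z)) ->
  (forall a, E a a) -> (forall a b, E a b -> E b a) ->
  (forall a b c, E a b -> E b c -> E a c) ->
  (forall p s W, nbhs (phi p s) W -> exists A B,
     [/\ nbhs p A, nbhs s B & forall p' s', A p' -> B s' -> W (phi p' s')]) ->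
  forall s, exists B, nbhs s B /\ forall t, B t -> forall p, E (phi p s) (phi p t).
Proof.
move=> cP oE Er Es Et hphi s.
have : forall p, exists AB : set P * set X, [/\ nbhs p AB.1, nbhs s AB.2 &
    forall p' s', AB.1 p' -> AB.2 s' -> E (phi p s) (phi p' s')].
  move=> p; have [A [B [nA nB hAB]]] := hphi p s (E (phi p s)) (open_nbhs_nbhs (conj (oE _) (Er _))).
  by exists (A, B).
case/choice => AB hAB.
have [l [_ cov]] := @cover_seq P setT (fun p => (AB p).1°) cP
  (fun p _ => conj (@open_interior _ _) (let: And3 h _ _ := hAB p in h)).
exists [set y | forall p, p \in l -> (AB p).2 y]; split.
  by apply: nbhs_finI => p _; case: (hAB p).
move=> t Bt p; have [q ql Uqp] := cov p I.
case: (hAB q) => _ nB h.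
have e1 := h p s (interior_subset Uqp) (nbhs_singleton nB).
have e2 := h p t (interior_subset Uqp) (Bt q ql).
exact: Et (Es _ _ e1) e2.
Qed.

Lemma disj0 (T : Type) (U V : set T) z : U `&` V = set0 -> U z -> V z -> False.
Proof. by move=> UV Uz Vz; have : (U `&` V) z by []; rewrite UV. Qed.

Lemma zero_dim (S : topologicalType) : hausdorff_space S -> compact [set: S] ->
  totally_disconnected [set: S] ->
  forall x y : S, x <> y -> exists U, [/\ clopen U, U x & ~ U y].
Proof.
move=> hS cS tdS x y xy.
pose Q := \bigcap_(U in [set U : set S | clopen U /\ U x]) U.
have cQ : closed Q by apply: closed_bigI => U [[]].
suff QS : Q `<=` [set x].
  apply: contrapT => hn; apply: xy; apply/esym/QS => U [cU Ux].
  by apply: contrapT => nUy; apply: hn; exists U.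
rewrite -(tdS x I); apply: connected_component_max => //.
  by move=> U [].
move=> B [b Bb] [C1 oC1 BQC1] [C2 cC2 BQC2].
have cA1 : closed B by rewrite BQC2; exact: closedI.
have cA2 : closed (Q `&` ~` C1) by apply: closedI => //; exact: open_closedC.
have A12 : B `&` (Q `&` ~` C1) = set0.
  by apply/seteqP; split => // z [+ [_ nz]]; rewrite BQC1 => -[].
have := (iffLR (@normal_openP Rdefinitions.R S)) (compact_normal hS cS) _ _ cA1 cA2 A12.
case=> U [V [oU oV BU A2V UV]].
have QUV : Q `<=` U `|` V.
  move=> q Qq; have [C1q|nC1q] := pselect (C1 q).
    by left; apply: BU; rewrite BQC1.
  by right; apply: A2V.
have cK : compact (~` (U `|` V)).
  apply: (subclosed_compact _ cS) => //; apply: open_closedC; exact: openU.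
have : forall k, exists W : set S, (~` (U `|` V)) k -> [/\ clopen W, W x & ~ W k].
  move=> k; have [Kk|nKk] := pselect ((~` (U `|` V)) k); last by exists setT.
  have nQk : ~ Q k by move=> /QUV.
  have [W [[cW Wx] nWk]] : exists2 W, (clopen W /\ W x) & ~ W k.
    apply: contrapT => hn; apply: nQk => W hW; apply: contrapT => nWk.
    by apply: hn; exists W.
  by exists W.
case/choice => Wf hW.
have [l [lK cov]] := @cover_seq S (~` (U `|` V)) (fun k => ~` Wf k) cK
  (fun k Kk => let: And3 c _ n := hW k Kk in conj (closed_openC c.2) n).
pose W := \bigcap_(k in [set k | k \in l]) Wf k.
have clW : clopen W.
  split; first by apply: open_finI => k /lK /hW [[]].
  by apply: closed_bigI => k /lK /hW [[]].
have Wx : W x by move=> k /lK /hW [].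
have WUV : W `<=` U `|` V.
  move=> z Wz; apply: contrapT => nz; have [k kl nWk] := cov z nz.
  exact: nWk (Wz k kl).
have [Bx|nBx] := pselect (B x).
  have clWU : clopen (W `&` U).
    split; first by apply: openI => //; case: clW.
    have -> : W `&` U = W `&` ~` V.
      apply/seteqP; split => z [Wz h]; split => //.
        by move=> Vz; exact: disj0 UV h Vz.
      by case: (WUV z Wz).
    by apply: closedI; [case: clW|exact: open_closedC].
  have QU : Q `<=` U by move=> q Qq; have [] := Qq (W `&` U) (conj clWU (conj Wx (BU x Bx))).
  apply/seteqP; split; first by rewrite BQC1 => z [].
  move=> q Qq; have [C1q|nC1q] := pselect (C1 q); first by rewrite BQC1.
  by exfalso; apply: disj0 UV (QU q Qq) (A2V q (conj Qq nC1q)).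
have Qx : Q x by move=> ? [] .
have Vx : V x by apply: A2V; split => // C1x; apply: nBx; rewrite BQC1.
have clWV : clopen (W `&` V).
  split; first by apply: openI => //; case: clW.
  have -> : W `&` V = W `&` ~` U.
    apply/seteqP; split => z [Wz h]; split => //.
      by move=> Uz; exact: disj0 UV Uz h.
    by case: (WUV z Wz).
  by apply: closedI; [case: clW|exact: open_closedC].
have QV : Q `<=` V by move=> q Qq; have [] := Qq (W `&` V) (conj clWV (conj Wx Vx)).
exfalso; apply: disj0 UV (BU b Bb) (QV b _).
by move: Bb; rewrite BQC1 => -[].
Qed.

Section Key.
Variables (S : topologicalType) (mul : S -> S -> S).
Hypotheses (massoc : associative mul)
  (mcont : continuous (fun p : S * S => mul p.1 p.2))
  (cS : compact [set: S]) (hS : hausdorff_space S)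
  (tdS : totally_disconnected [set: S]).

Let zd := zero_dim hS cS tdS.

Lemma mul_nbhs a b W : nbhs (mul a b) W -> exists A B,
  [/\ nbhs a A, nbhs b B & forall a' b', A a' -> B b' -> W (mul a' b')].
Proof.
move=> nW; have := @mcont (a, b) _ nW.
case=> [[A B]] /= [nA nB] hAB; exists A, B; split => // a' b' Aa Bb.
exact: (hAB (a', b')).
Qed.

Lemma sandwich_pt (O : set S) c : open O -> O c ->
  exists W, [/\ clopen W, W c & W `<=` O].
Proof.
move=> oO Oc.
have cK : compact (~` O) by apply: (subclosed_compact _ cS) => //; exact: open_closedC.
have : forall k, exists U : set S, (~` O) k -> [/\ clopen U, U c & ~ U k].
  move=> k; have [Kk|nKk] := pselect ((~` O) k); last by exists setT.
  have [U hU] := zd (nesym (fun e : k = c => Kk (eq_ind_r O Oc e))).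
  by exists U.
case/choice => Uf hU.
have [l [lK cov]] := @cover_seq S (~` O) (fun k => ~` Uf k) cK
  (fun k Kk => let: And3 cl _ n := hU k Kk in conj (closed_openC cl.2) n).
exists (\bigcap_(k in [set k | k \in l]) Uf k); split.
- split; first by apply: open_finI => k /lK /hU [[]].
  by apply: closed_bigI => k /lK /hU [[]].
- by move=> k /lK /hU [].
- move=> z Wz; apply: contrapT => nz; have [k kl nUk] := cov z nz.
  exact: nUk (Wz k kl).
Qed.

Lemma sandwich (C O : set S) : compact C -> open O -> C `<=` O ->
  exists W, [/\ clopen W, C `<=` W & W `<=` O].
Proof.
move=> cC oO CO.
have : forall c, exists W : set S, C c -> [/\ clopen W, W c & W `<=` O].
  move=> c; have [Cc|nCc] := pselect (C c); last by exists setT.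
  by have [W hW] := sandwich_pt oO (CO c Cc); exists W.
case/choice => Wf hW.
have [l [lC cov]] := @cover_seq S C Wf cC
  (fun c Cc => let: And3 cl w _ := hW c Cc in conj cl.1 w).
exists [set z | exists2 c, c \in l & Wf c z]; split.
- split.
    have -> : [set z | exists2 c, c \in l & Wf c z] =
      \bigcup_(c in [set c | c \in l]) Wf c by apply/seteqP; split => z [c ? ?]; exists c.
    by apply: bigcup_open => c /lC /hW [[]].
  rewrite -openC.
  have -> : ~` [set z | exists2 c, c \in l & Wf c z] =
     [set z | forall c, c \in l -> (~` Wf c) z].
    apply/seteqP; split => z.
      by move=> hz c cl Wz; apply: hz; exists c.
    by move=> hz [c cl Wz]; exact: hz c cl Wz.
  by apply: open_finI => c /lC /hW [cl _ _]; exact: closed_openC cl.2.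
- by move=> z Cz; have [c cl Wz] := cov z Cz; exists c.
- by move=> z [c /lC /hW [_ _ WO] Wz]; exact: WO.
Qed.

Section Synt.
Variable W : set S.
Hypothesis clW : clopen W.

Let E (a b : S) := (W a <-> W b).

Let Eopen z : open (E z).
Proof.
have [Wz|nWz] := pselect (W z).
  have -> : E z = W.
    by apply/seteqP; split => b h; [exact: (proj1 h) Wz|split].
  exact: clW.1.
have -> : E z = ~` W.
  apply/seteqP; split => b h.
    by move=> Wb; apply: nWz; exact: (proj2 h) Wb.
  by split => h'; exfalso; [exact: nWz h'|exact: h h'].
exact: closed_openC clW.2.
Qed.

Let Er a : E a a. Proof. by rewrite /E. Qed.
Let Es a b : E a b -> E b a. Proof. by rewrite /E; tauto. Qed.
Let Et a b c : E a b -> E b c -> E a c. Proof. by rewrite /E; tauto. Qed.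

Definition synt (p : S * S) := let s := p.1 in let t := p.2 in
  [/\ E s t, (forall x, E (mul x s) (mul x t)), (forall y, E (mul s y) (mul t y))
    & (forall x y, E (mul (mul x s) y) (mul (mul x t) y))].

Lemma synt_sub s t : synt (s, t) -> W s -> W t.
Proof. by case=> h _ _ _; apply h. Qed.

Lemma synt_refl s : synt (s, s). Proof. by split. Qed.
Lemma synt_sym s t : synt (s, t) -> synt (t, s).
Proof. by case=> h1 h2 h3 h4; split => *; apply: Es. Qed.
Lemma synt_trans s t u : synt (s, t) -> synt (t, u) -> synt (s, u).
Proof.
case=> h1 h2 h3 h4 [k1 k2 k3 k4]; split => *; apply: Et; eauto.
Qed.

Lemma synt_r s t u : synt (s, t) -> synt (mul s u, mul t u).
Proof.
case=> h1 h2 h3 h4; split => /=.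
- exact: h3.
- by move=> x; rewrite !massoc; exact: h4.
- by move=> y; rewrite -!massoc; exact: h3.
- by move=> x y; rewrite !massoc; move: (h4 x (mul u y)); rewrite !massoc.
Qed.

Lemma synt_l s t u : synt (s, t) -> synt (mul u s, mul u t).
Proof.
case=> h1 h2 h3 h4; split => /=.
- exact: h2.
- by move=> x; rewrite !massoc; exact: h2.
- by move=> y; exact: h4.
- by move=> x y; rewrite !massoc; exact: h4.
Qed.

Lemma synt_congr : congruence mul synt.
Proof.
split.
- exact: synt_refl.
- exact: synt_sym.
- exact: synt_trans.
- move=> x y z w h1 h2; apply: (@synt_trans _ (mul y z)); first exact: synt_r.
  exact: synt_l.
Qed.

Lemma synt_nbhs s : exists B, nbhs s B /\ forall t, B t -> synt (s, t).
Proof.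
have [B1 [n1 h1]] := @unif_lemma S S (fun x s => mul x s) E cS Eopen Er Es Et
  (fun p s W nW => mul_nbhs nW) s.
have [B2 [n2 h2]] := @unif_lemma S S (fun y s => mul s y) E cS Eopen Er Es Et
  (fun p s W nW => let: ex_intro A (ex_intro B (And3 nA nB h)) := mul_nbhs nW in
     ex_intro _ B (ex_intro _ A (And3 nB nA (fun p' s' Bp As => h s' p' As Bp)))) s.
have cSS : compact [set: S * S].
  by rewrite -setXTT; exact: compact_setX.
have hyp3 : forall (p : S * S) s W, nbhs (mul (mul p.1 s) p.2) W -> exists A B,
     [/\ nbhs p A, nbhs s B & forall p' s', A p' -> B s' -> W (mul (mul p'.1 s') p'.2)].
  move=> p s0 W0 nW; have [A1 [C [nA1 nC h]]] := mul_nbhs nW.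
  have [A [B [nA nB h']]] := mul_nbhs nA1.
  exists (A `*` C), B; split => //.
    by exists (A, C).
  by move=> p' s' [hp1 hp2] Bs; apply: h => //; exact: h'.
have [B3 [n3 h3]] := @unif_lemma (S * S)%type S (fun p s => mul (mul p.1 s) p.2) E cSS Eopen Er Es Et hyp3 s.
exists (E s `&` (B1 `&` (B2 `&` B3))); split.
  apply: filterI; first by apply: open_nbhs_nbhs; split; [exact: Eopen|exact: Er].
  by apply: filterI => //; exact: filterI.
move=> t [Et' [B1t [B2t B3t]]]; split => //.
- by move=> x; exact: h1.
- by move=> y; exact: h2.
- by move=> x y; exact: (h3 t B3t (x, y)).
Qed.

Lemma synt_open : open synt.
Proof.
rewrite openE => -[s t] st; rewrite /interior.
have [Bs [ns hs]] := synt_nbhs s; have [Bt [nt ht]] := synt_nbhs t.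
exists (Bs, Bt) => //= -[s' t'] /= [Bs' Bt'].
apply: synt_trans (synt_sym (hs _ Bs')) _.
exact: synt_trans st (ht _ Bt').
Qed.

End Synt.

Lemma key (C O : set S) : compact C -> open O -> C `<=` O ->
  exists rho, [/\ open rho, congruence mul rho &
    forall s t, C s -> rho (s, t) -> O t].
Proof.
move=> cC oO CO; have [W [clW CW WO]] := sandwich cC oO CO.
exists (synt W); split; first exact: synt_open.
  exact: synt_congr.
by move=> s t Cs h; apply: WO; apply: synt_sub h _; exact: CW.
Qed.

Lemma key_sep s t : s <> t -> exists rho, [/\ open rho, congruence mul rho & ~ rho (s, t)].
Proof.
move=> st.
have oO : open (~` [set t]).
  rewrite openC; exact/accessible_closed_set1/hausdorff_accessible.
have [rho [oR cR hR]] := @key [set s] (~` [set t]) ltac:(exact: compact_set1) oO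
  ltac:(by move=> z -> /= e; apply: st).
by exists rho; split => // r; exact: hR s t erefl r erefl.
Qed.

End Key.

Lemma sect_open (S : topologicalType) (rho : set (S * S)) s :
  open rho -> open [set t | rho (s, t)].
Proof.
move=> orho; rewrite openE => t rst; rewrite /interior.
have : open rho := orho; rewrite openE => /(_ (s, t) rst); rewrite /interior.
case=> [[A B]] /= [nA nB] hAB.
by apply: filterS nB => t' Bt'; apply: (hAB (s, t')); split => //; exact: nbhs_singleton.
Qed.

Lemma fin_bound (T X : Type) (D : set X) (le : X -> X -> Prop) (R : T -> X -> Prop)
  (J : set T) : finite_set J -> (exists x, D x) ->
  (forall x y, D x -> D y -> exists2 z, D z & le z x /\ le z y) ->
  (forall t x z, R t x -> le z x -> R t z) ->
  (forall t, J t -> exists2 x, D x & R t x) ->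
  exists2 x, D x & forall t, J t -> R t x.
Proof.
elim/Pchoice: T => T in R J *.
move=> /finite_fsetP [B ->] [x0 Dx0] dir mono hJ.
have : forall l : seq T, (forall t, t \in l -> exists2 x, D x & R t x) ->
    exists2 x, D x & forall t, t \in l -> R t x.
  elim=> [|a l IH] h; first by exists x0.
  have [x Dx hx] := IH (fun t tl => h t (mem_behead (s := a :: l) tl)).
  have [y Dy hy] := h a (mem_head a l).
  have [z Dz [zx zy]] := dir _ _ Dx Dy; exists z => // t.
  rewrite in_cons => /orP[/eqP->|tl]; first exact: mono hy zy.
  exact: mono (hx t tl) zx.
move=> /(_ (finmap.enum_fset B)) [].
  by move=> t tB; apply: hJ.
by move=> x Dx hx; exists x => // t tB; apply: hx.
Qed.

Section Main.
Variables (S : topologicalType) (mul : S -> S -> S).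
Hypotheses (massoc : associative mul)
  (mcont : continuous (fun p : S * S => mul p.1 p.2))
  (cS : compact [set: S]) (hS : hausdorff_space S)
  (tdS : totally_disconnected [set: S]).
Variables (M : set (S -> S)) (F : set (set (S * S))).
Hypotheses (hF1 : forall rho, F rho -> [/\ open rho, congruence mul rho &
      forall f, M f -> forall x y, rho (x, y) -> rho (f x, f y)])
  (hF2 : forall sigma, open sigma -> congruence mul sigma ->
      exists2 rho, F rho & rho `<=` sigma)
  (hMcomp : forall f g, M f -> M g -> M (f \o g))
  (hME : forall f, M f -> EndS mul f).

Definition compat (g : set (S * S) -> S -> S) :=
  forall rho rho', F rho -> F rho' -> rho' `<=` rho ->
    forall s, rho (g rho s, g rho' s).

Hypothesis hMlim : forall (g : set (S * S) -> S -> S) f,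
  (forall rho, F rho -> M (g rho)) -> compat g -> EndS mul f ->
  (forall rho, F rho -> forall s, rho (g rho s, f s)) -> M f.

Lemma Fr rho x : F rho -> rho (x, x). Proof. by case/hF1 => _ [h _ _ _] _; exact: h. Qed.
Lemma Fs rho x y : F rho -> rho (x, y) -> rho (y, x). Proof. by case/hF1 => _ [_ h _ _] _; exact: h. Qed.
Lemma Ft rho x y z : F rho -> rho (x, y) -> rho (y, z) -> rho (x, z).
Proof. by case/hF1 => _ [_ _ h _] _; exact: h. Qed.
Lemma Fm rho x y z w : F rho -> rho (x, y) -> rho (z, w) -> rho (mul x z, mul y w).
Proof. by case/hF1 => _ [_ _ _ h] _; exact: h. Qed.
Lemma Fi rho f x y : F rho -> M f -> rho (x, y) -> rho (f x, f y).
Proof. by move=> /hF1 [_ _ h] Mf; exact: h. Qed.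
Lemma Fo rho : F rho -> open rho. Proof. by case/hF1. Qed.

Lemma F_dir r1 r2 : F r1 -> F r2 -> exists2 r3, F r3 & r3 `<=` r1 `&` r2.
Proof.
move=> F1 F2; apply: hF2; first by apply: openI; exact: Fo.
split.
- by move=> x; split; exact: Fr.
- by move=> x y [h1 h2]; split; exact: Fs.
- by move=> x y z [h1 h2] [k1 k2]; split; [exact: (Ft F1 h1 k1)|exact: (Ft F2 h2 k2)].
- by move=> x y z w [h1 h2] [k1 k2]; split; exact: Fm.
Qed.

Lemma F_ne : exists rho, F rho.
Proof.
have cT : congruence mul setT by [].
have [rho Fr _] := hF2 (@openT _) cT.
by exists rho.
Qed.

Lemma keyF (C O : set S) : compact C -> open O -> C `<=` O ->
  exists2 rho, F rho & forall s t, C s -> rho (s, t) -> O t.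
Proof.
move=> cC oO CO; have [sig [os cs hs]] := key massoc mcont cS hS tdS cC oO CO.
have [rho Frho rs] := hF2 os cs; exists rho => // s t Cs r; exact: hs s t Cs (rs _ r).
Qed.

Lemma sepF x y : (forall rho, F rho -> rho (x, y)) -> x = y.
Proof.
move=> h; apply: contrapT => xy.
have [sig [os cs ns]] := key_sep massoc mcont cS hS tdS xy.
have [rho Frho rs] := hF2 os cs; exact: ns (rs _ (h _ Frho)).
Qed.

Lemma LIM (g : set (S * S) -> S -> S) :
  (forall rho, F rho -> EndS mul (g rho)) -> compat g ->
  exists2 f, EndS mul f & forall rho, F rho -> forall s, rho (g rho s, f s).
Proof.
move=> gE cg.
have : forall s, exists y, forall rho, F rho -> rho (g rho s, y).
  move=> s; pose G := filter_from F (fun rho => [set t | rho (g rho s, t)]).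
  have FG : Filter G.
    apply: filter_from_filter; first exact: F_ne.
    move=> r1 r2 F1 F2; have [r3 F3 r3s] := F_dir F1 F2; exists r3 => // t h.
    have [h1 h2] := r3s _ h; split.
      exact: Ft F1 (cg _ _ F1 F3 (fun p q => (r3s p q).1) s) h1.
    exact: Ft F2 (cg _ _ F2 F3 (fun p q => (r3s p q).2) s) h2.
  have PG : ProperFilter G.
    by apply: filter_from_proper => rho Frho; exists (g rho s); exact: Fr.
  have [y [_ cy]] := cS PG (@filterT _ G _).
  exists y => rho Frho.
  have [z [/= h1 h2]] := cy _ _ (ex_intro2 _ _ rho Frho (fun t (h : rho (g rho s, t)) => h))
    (open_nbhs_nbhs (conj (sect_open y (Fo Frho)) (Fr y Frho))).
  exact: Ft Frho h1 (Fs Frho h2).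
case/choice => f hf; exists f; last by move=> rho Frho s; exact: hf s rho Frho.
split.
  apply/continuousP => A oA; rewrite openE => s /= As; rewrite /interior.
  have [rho Frho hr] := @keyF [set f s] A ltac:(exact: compact_set1) oA
    ltac:(by move=> z ->).
  have gc := (gE rho Frho).1.
  have : nbhs s (g rho @^-1` [set t | rho (g rho s, t)]).
    apply: open_nbhs_nbhs; split; last exact: Fr.
    by apply: (iffLR (continuousP _)) gc _ _; exact: sect_open (Fo Frho).
  apply: filterS => s' /= h; apply: (hr (f s)) => //.
  apply (Ft Frho (Fs Frho (hf s rho Frho))).
  exact: Ft Frho h (hf s' rho Frho).
move=> x y; apply: sepF => rho Frho.
have e := (gE rho Frho).2 x y.
apply (Ft Frho (Fs Frho (hf (mul x y) rho Frho))); rewrite e.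
exact: Fm Frho (hf x rho Frho) (hf y rho Frho).
Qed.



Let Fh := [set rhat M rho | rho in F].

Lemma class_closed rho a : F rho -> closed [set t | rho (a, t)].
Proof.
move=> Frho; rewrite -openC openE => t nt; rewrite /interior.
apply: (@filterS _ _ _ [set t' | rho (t, t')]).
  by move=> t' h h'; apply: nt; exact: Ft Frho h' (Fs Frho h).
apply: open_nbhs_nbhs; split; [exact: sect_open (Fo Frho)|exact: Fr].
Qed.

Lemma r_cont rho : F rho -> r_continuous M rho.
Proof.
move=> Frho f Mf.
have [l [_ cov]] := @cover_seq S setT (fun a => [set t | rho (a, t)]) cS
  (fun a _ => conj (sect_open a (Fo Frho)) (Fr a Frho)).
exists [set g : {compact-open, S -> S} | forall a, a \in l ->
  g @` [set t | rho (a, t)] `<=` [set w | exists2 t, rho (a, t) & rho (f t, w)]].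
split.
  apply: open_finI => a _; apply: compact_open_open.
    by apply: (subclosed_compact _ cS) => //; exact: class_closed.
  have -> : [set w | exists2 t, rho (a, t) & rho (f t, w)] =
    \bigcup_(t in [set t | rho (a, t)]) [set w | rho (f t, w)].
    by apply/seteqP; split => w [t h1 h2]; exists t.
  by apply: bigcup_open => t _; exact: sect_open (Fo Frho).
apply/seteqP; split => g.
  move=> [_ Mg hg]; split => // a _ _ [t h <-]; exists t => //; exact: hg.
move=> [Vg Mg]; split => //= x.
have [a al hax] := cov x I.
have [t h1 h2] := Vg a al (g x) (ex_intro2 _ _ x hax erefl).
exact (Ft Frho (Fi Frho Mf (Ft Frho (Fs Frho hax) h1)) h2).
Qed.

Lemma rhat_refl rho f : F rho -> M f -> rhat M rho (f, f).
Proof. by move=> Frho Mf; split => // s; exact: Fr _ Frho. Qed.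
Lemma rhat_sym rho f g : F rho -> rhat M rho (f, g) -> rhat M rho (g, f).
Proof. by move=> Frho [Mf Mg h]; split => // s; exact: Fs Frho (h s). Qed.
Lemma rhat_trans rho f g h : F rho -> rhat M rho (f, g) -> rhat M rho (g, h) ->
  rhat M rho (f, h).
Proof. by move=> Frho [Mf Mg h1] [_ Mh h2]; split => // s; exact: Ft Frho (h1 s) (h2 s). Qed.
Lemma rhat_comp rho f g h k : F rho -> rhat M rho (f, g) -> rhat M rho (h, k) ->
  rhat M rho (f \o h, g \o k).
Proof.
move=> Frho [Mf Mg h1] [Mh Mk h2]; split => /=; try exact: hMcomp.
move=> s; exact (Ft Frho (Fi Frho Mf (h2 s)) (h1 (k s))).
Qed.
Lemma rhat_mono r1 r2 : r1 `<=` r2 -> rhat M r1 `<=` rhat M r2.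
Proof. by move=> r12 [f g] [Mf Mg h]; split => // s; apply: r12. Qed.

Lemma P2 rho : F rho -> M_congruence M (rhat M rho).
Proof.
move=> Frho; split.
- by move=> f g [].
- by move=> f; exact: rhat_refl.
- by move=> f g; exact: rhat_sym.
- by move=> f g h; exact: rhat_trans.
- by move=> f g h k; exact: rhat_comp.
Qed.

Lemma P3 rho : F rho -> M2_open M (rhat M rho).
Proof.
move=> Frho f g hfg; have [Mf Mg _] := hfg.
exists [set f' | rhat M rho (f, f')], [set g' | rhat M rho (g, g')]; split.
- exact: r_cont.
- exact: r_cont.
- exact: rhat_refl.
- exact: rhat_refl.
- move=> f' g' h1 h2; exact (rhat_trans Frho (rhat_sym Frho h1) (rhat_trans Frho hfg h2)).
Qed.

Lemma C1 f : M f -> proj_lim M Fh (canon Fh f).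
Proof.
move=> Mf; split.
- move=> sigma Fs; exists f => //; apply/seteqP; split => g /=; [by case|by split].
- by move=> sigma tau _ Ft' st g [_ h]; split => //; exact: st.
- by move=> sigma nF; apply/seteqP; split => g // [].
Qed.

Lemma C2 f g : M f -> M g -> canon Fh f = canon Fh g -> f = g.
Proof.
move=> Mf Mg e; apply: funext => x; apply: sepF => rho Frho.
have : canon Fh f (rhat M rho) f by split; [exists rho|exact: rhat_refl].
rewrite e => -[_ [_ _ h]]; exact: Fs Frho (h x).
Qed.

Lemma C3 c : proj_lim M Fh c -> exists2 f, M f & canon Fh f = c.
Proof.
case=> hc1 hc2 hc3.
have : forall rho, exists g, F rho -> M g /\ c (rhat M rho) = [set h | rhat M rho (g, h)].
  move=> rho; have [Frho|nF] := pselect (F rho); last by exists id.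
  have [g Mg e] := hc1 _ (ex_intro2 _ _ rho Frho erefl).
  by exists g.
case/choice => g hg.
have cg : compat g.
  move=> r r' Fr' Fr'' rr s.
  have hcr : c (rhat M r') `<=` c (rhat M r).
    by apply: hc2; [exists r'|exists r|exact: rhat_mono].
  have := hcr (g r'); case: (hg r Fr') => _ ->; case: (hg r' Fr'') => Mg' ->.
  by move=> /(_ (rhat_refl Fr'' Mg')) [_ _ h]; exact: h s.
have [f Ef hf] := LIM (fun rho Frho => hME (hg rho Frho).1) cg.
have Mf : M f by apply: hMlim Ef hf => // rho Frho; case: (hg rho Frho).
exists f => //; apply: funext => sigma.
have [[rho Frho <-]|nF] := pselect (Fh sigma); last first.
  by rewrite (hc3 _ nF); apply/seteqP; split => h // [].
case: (hg rho Frho) => Mg ->.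
have gf : rhat M rho (g rho, f) by split => // s; exact: hf.
apply/seteqP; split => h.
  by case=> _ h'; exact: rhat_trans Frho gf h'.
move=> h'; split; first by exists rho.
exact: rhat_trans Frho (rhat_sym Frho gf) h'.
Qed.

Lemma C4 f g : M f -> M g ->
  canon Fh (f \o g) = lim_mul Fh (canon Fh f) (canon Fh g).
Proof.
move=> Mf Mg; apply: funext => sigma; apply/seteqP; split => h.
  case=> Fs hs; split => //; exists f, g; split => //.
    by split => //; case: Fs => rho Frho <-; exact: rhat_refl.
  by split => //; case: Fs => rho Frho <-; exact: rhat_refl.
case=> Fs [x [y [[_ fx] [_ gy] xyh]]]; split => //.
move: fx gy xyh; case: Fs => rho Frho <- fx gy xyh.
exact: rhat_trans Frho (rhat_comp Frho fx gy) xyh.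
Qed.

Lemma NB f (V : set {compact-open, S -> S}) : continuous f -> open V -> V f ->
  exists2 rho, F rho & forall g, (forall s, rho (f s, g s)) -> V g.
Proof.
move=> cf oV Vf.
pose G := filter_from F (fun rho => [set g : {compact-open, S -> S} | forall s, rho (f s, g s)]).
have FG : Filter G.
  apply: filter_from_filter; first exact: F_ne.
  move=> r1 r2 F1 F2; have [r3 F3 r3s] := F_dir F1 F2; exists r3 => // h hh.
  by split => s; have [] := r3s _ (hh s).
have cvG : G --> (f : {compact-open, S -> S}).
  apply/compact_open_cvgP => K O cK oO fKO.
  have cfK : compact (f @` K) by apply: continuous_compact => //; exact: continuous_subspaceT.
  have [rho Frho hr] := keyF cfK oO fKO.
  exists rho => // g hg _ [t Kt <-]; exact: (hr (f t) (g t) (ex_intro2 _ _ t Kt erefl) (hg t)).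
have : nbhs (f : {compact-open, S -> S}) V by apply: open_nbhs_nbhs.
by move=> /cvG [rho Frho sub]; exists rho => // g hg; apply: sub.
Qed.

Lemma C5 U : U `<=` M -> (M_open M U <-> lim_open M Fh (canon Fh @` U)).
Proof.
move=> UM; split.
  case=> V [oV UVM]; split; first by move=> _ [f Uf <-]; exact: C1 (UM _ Uf).
  move=> _ [f Uf <-].
  have := Uf; rewrite UVM => -[Vf Mf].
  have [rho Frho hr] := NB (hME Mf).1 oV Vf.
  exists [set rhat M rho]; split.
  - exact: finite_set1.
  - by move=> _ ->; exists rho.
  move=> c' pl agree; have [g Mg eg] := C3 pl; subst c'.
  have e := agree (rhat M rho) erefl.
  have : canon Fh g (rhat M rho) g by split; [exists rho|exact: rhat_refl].
  rewrite e => -[_ [_ _ h]]; exists g => //; split => //.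
  exact: hr.
case=> Wpl hW.
exists (\bigcup_(V' in [set V' : set {compact-open, S -> S} | open V' /\ V' `&` M `<=` U]) V').
split; first by apply: bigcup_open => V' [].
apply/seteqP; split; last by move=> f [[V' [_ sub] V'f] Mf]; exact: sub.
move=> f Uf; have Mf := UM _ Uf; split => //.
have [J [fJ JF agree]] := hW _ (ex_intro2 _ _ f Uf erefl).
have [rho Frho hrho] := @fin_bound _ _ F (fun x y => x `<=` y)
  (fun sigma rho => rhat M rho `<=` sigma) J fJ F_ne
  (fun x y Fx Fy => let: ex_intro2 z Fz zs := F_dir Fx Fy in
     ex_intro2 _ _ z Fz (conj (fun p q => (zs p q).1) (fun p q => (zs p q).2)))
  (fun t x z h zx => subset_trans (rhat_mono zx) h)
  (fun t Jt => let: ex_intro2 rho Frho e := JF t Jt in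
     ex_intro2 _ _ rho Frho (eq_ind _ (fun u => rhat M rho `<=` u) (@subset_refl _ _) _ e)).
have loc : forall g, rhat M rho (f, g) -> U g.
  move=> g hfg; have Mg : M g by case: hfg.
  have : (canon Fh @` U) (canon Fh g).
    apply: agree; first exact: C1.
    move=> sigma Js; have := hrho _ Js; have := JF _ Js.
    case=> rho1 Frho1 <- sub; have fg := sub _ hfg.
    apply/seteqP; split => h [Fs h'].
      by split => //; exact: rhat_trans Frho1 fg h'.
    by split => //; exact: rhat_trans Frho1 (rhat_sym Frho1 fg) h'.
  by case=> f' Uf' e; rewrite -(C2 (UM _ Uf') Mg e).
have [V' [oV' eV']] := r_cont Frho Mf.
exists V'.
  by split => // g; rewrite -eV'; exact: loc.
have : [set g | rhat M rho (f, g)] f by exact: rhat_refl.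
by rewrite eV' => -[].
Qed.

Lemma main_concl : limit_conclusion M F.
Proof.
split.
  by move=> rho Frho; split; [exact: r_cont|exact: P2|exact: P3].
split.
- exact: C1.
- exact: C2.
- exact: C3.
- exact: C4.
- exact: C5.
Qed.

End Main.

Lemma EndS_comp (S : topologicalType) (mul : S -> S -> S) f g :
  EndS mul f -> EndS mul g -> EndS mul (f \o g).
Proof.
move=> [cf hf] [cg hg]; split.
  by move=> x; apply: continuous_comp; [exact: cg|exact: cf].
by move=> x y /=; rewrite hg hf.
Qed.

Lemma AutS_End (S : topologicalType) (mul : S -> S -> S) f : AutS mul f -> EndS mul f.
Proof. by case. Qed.

Lemma inv_hom (S : topologicalType) (mul : S -> S -> S) f g :
  is_hom mul f -> cancel f g -> cancel g f -> is_hom mul g.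
Proof.
move=> hf fg gf x y.
by rewrite -{1}(gf x) -{1}(gf y) -hf fg.
Qed.

Lemma AutS_comp (S : topologicalType) (mul : S -> S -> S) f g :
  AutS mul f -> AutS mul g -> AutS mul (f \o g).
Proof.
move=> [cf hf [f' [cf' ff' f'f]]] [cg hg [g' [cg' gg' g'g]]].
have [c h] := EndS_comp (conj cf hf) (conj cg hg).
split => //; exists (g' \o f'); split.
- by move=> x; apply: continuous_comp; [exact: cf'|exact: cg'].
- by move=> x /=; rewrite ff' gg'.
- by move=> x /=; rewrite g'g f'f.
Qed.

Theorem theorem9 (S : topologicalType) (mul : S -> S -> S) :
  profinite_semigroup mul ->
  (forall F : set (set (S * S)),
     fundamental_system mul (fully_invariant mul) F ->
     limit_conclusion (EndS mul) F) /\
  (forall F : set (set (S * S)),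
     fundamental_system mul (characteristic mul) F ->
     limit_conclusion (AutS mul) F).
Proof.
case=> massoc mcont cS hS tdS; split => F [hF1 hF2].
  apply: (main_concl massoc mcont cS hS tdS hF1 hF2).
  - exact: EndS_comp.
  - by [].
  - by move=> g f _ _ Ef _.
apply: (main_concl massoc mcont cS hS tdS hF1 hF2).
- exact: AutS_comp.
- exact: AutS_End.
move=> g f gA cg Ef hf.
have : forall rho, exists k : S -> S, F rho ->
    [/\ continuous k, cancel (g rho) k & cancel k (g rho)].
  move=> rho; have [Frho|nF] := pselect (F rho); last by exists id.
  by have [_ _ [k hk]] := gA rho Frho; exists k.
case/choice => k hk.
have kA rho : F rho -> AutS mul (k rho).
  move=> Frho; have [ck gk kg] := hk rho Frho; have [cg' hg _] := gA rho Frho.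
  split => //; first exact: inv_hom hg gk kg.
  by exists (g rho).
have inv rho h x y : F rho -> AutS mul h -> rho (x, y) -> rho (h x, h y).
  by move=> Frho hA; have [_ _ i] := hF1 rho Frho; exact: i.
have ck : compat F k.
  move=> r r' Fr Fr' rr s.
  have e := cg r r' Fr Fr' rr (k r' s).
  have [_ _ kg'] := hk r' Fr'; rewrite kg' in e.
  have := inv r (k r) _ _ Fr (kA r Fr) e; have [_ gk _] := hk r Fr; rewrite gk => e'.
  by have [_ [_ sy _ _] _] := hF1 r Fr; exact: sy.
have [h Eh hh] := LIM massoc mcont cS hS tdS hF1 hF2 (fun rho Frho => AutS_End (kA rho Frho)) ck.
case: Ef => cf homf; split => //; exists h; split; first exact: Eh.1.
- move=> s; apply: (sepF massoc mcont cS hS tdS hF2) => rho Frho.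
  have [_ [_ sy tr _] _] := hF1 rho Frho.
  have [_ gk _] := hk rho Frho.
  apply (tr _ _ _ (sy _ _ (hh rho Frho (f s)))).
  rewrite -{2}(gk s); apply: (inv _ _ _ _ Frho (kA rho Frho)).
  exact: sy (hf rho Frho s).
- move=> s; apply: (sepF massoc mcont cS hS tdS hF2) => rho Frho.
  have [_ [_ sy tr _] _] := hF1 rho Frho.
  have [_ _ kg] := hk rho Frho.
  apply (tr _ _ _ (sy _ _ (hf rho Frho (h s)))).
  rewrite -{2}(kg s); apply: (inv _ _ _ _ Frho (gA rho Frho)).
  exact: sy (hh rho Frho s).
Qed.
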